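(* There is a function $g$ such that the following holds. Let $A \in \mathbb{Z}^{m \times n}$ and let $F$ be a td-decomposition of the dual graph $G_D(A)$. Let $A_B \in \mathbb{Z}^{m \times m}$ be a submatrix of $A$ formed by a collection of $m$ columns of $A$ which is invertible. Then $\mathrm{fr}(A_B^{-1}) \le g(\mathrm{height}(F), \|A\|_\infty)$.
   Context: The primal graph $G_P(M)$ of a matrix $M$ has one vertex per column of $M$, two columns adjacent if some row has non-zero entries in both; the dual graph is $G_D(A) := G_P(A^{\intercal})$ (vertices are rows of $A$, adjacent if some column has non-zero entries in both). For a rooted tree $F$, $\mathrm{cl}(F)$ is the graph obtained by making each vertex adjacent to all its ancestors; $\mathrm{height}(F)$ is the maximum number of vertices on a root-leaf path. A td-decomposition of a graph $G$ is a rooted tree $F$ on the vertex set of $G$ with $G \subseteq \mathrm{cl}(F)$. For a rational matrix $M$, $\mathrm{fr}(M)$ is the maximum denominator among its entries written in lowest terms. *)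

(* Defs.v *)
From mathcomp Require Import all_boot all_order all_algebra.
Set Implicit Arguments. Unset Strict Implicit. Unset Printing Implicit Defensive.
Import Order.TTheory GRing.Theory Num.Theory.
Local Open Scope ring_scope.

(* A rooted tree on the vertex set 'I_m, given by a parent function
   (None = the root). *)
Record rtree (m : nat) := RTree { parent : 'I_m -> option 'I_m }.

Fixpoint iterp m (F : rtree m) (k : nat) (v : 'I_m) : option 'I_m :=
  match k with
  | 0%N => Some v
  | k'.+1 => obind (parent F) (iterp F k' v)
  end.

(* u is a proper ancestor of v (paths have fewer than m edges in an acyclic tree) *)
Definition ancestor m (F : rtree m) (u v : 'I_m) : bool :=
  [exists k : 'I_m, iterp F k.+1 v == Some u].

Definition is_rooted_tree m (F : rtree m) : Prop :=
  (forall (v : 'I_m) (k : nat), iterp F k.+1 v <> Some v) /\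
  (forall u v : 'I_m, parent F u = None -> parent F v = None -> u = v).

(* height = max number of vertices on a root-leaf path *)
Definition height m (F : rtree m) : nat :=
  (\max_(v : 'I_m) (#|[set u | ancestor F u v]|).+1)%N.

Definition cl_adj m (F : rtree m) (u v : 'I_m) : bool :=
  ancestor F u v || ancestor F v u.

Definition dual_adj m n (A : 'M[int]_(m, n)) (i j : 'I_m) : bool :=
  (i != j) && [exists c : 'I_n, (A i c != 0) && (A j c != 0)].

Definition td_decomposition_dual m n (A : 'M[int]_(m, n)) (F : rtree m) : Prop :=
  is_rooted_tree F /\ (forall i j, dual_adj A i j -> cl_adj F i j).

Definition maxnorm m n (A : 'M[int]_(m, n)) : nat :=
  (\max_(i : 'I_m) \max_(j : 'I_n) `|A i j|%N)%N.

Definition fr m n (M : 'M[rat]_(m, n)) : nat :=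
  (\max_(i : 'I_m) \max_(j : 'I_n) `|denq (M i j)|%N)%N.

(* Main.v *)
Require Import Defs.
From mathcomp Require Import all_boot all_order all_algebra zify ring.
From Stdlib Require Import Classical.
Import Order.TTheory GRing.Theory Num.Theory.
Set Implicit Arguments. Unset Strict Implicit. Unset Printing Implicit Defensive.

Section Tree.
Variables (m : nat) (F : rtree m).
Hypothesis acyc : forall (v : 'I_m) (k : nat), iterp F k.+1 v <> Some v.

Lemma iterpD a b v : iterp F (a + b) v = obind (iterp F a) (iterp F b v).
Proof.
elim: a => [|a IH] /=; first by case: (iterp F b v).
rewrite IH; by case: (iterp F b v).
Qed.

Lemma iterpS' k v : iterp F k.+1 v = obind (iterp F k) (parent F v).
Proof. by rewrite -addn1 iterpD. Qed.

Lemma iterp_none k v : (m <= k)%N -> iterp F k v = None.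
Proof.
move=> hk.
case E: (iterp F k v) => [w|] //; exfalso.
have allS : forall i, (i <= k)%N -> exists w', iterp F i v = Some w'.
  move=> i hi; case Ei: (iterp F i v) => [w'|]; first by eauto.
  by move: E; rewrite -(subnK hi) iterpD Ei.
pose phi (i : 'I_m.+1) : 'I_m := odflt v (iterp F i v).
have inj : injective phi.
  move=> i i' heq; apply/val_inj/eqP; apply/negPn/negP => hne.
  wlog lt : i i' heq hne / (i < i')%N.
    move=> W; case: (ltngtP i i') => h; [exact: (W i i')| |by move/val_inj: h => h; rewrite h eqxx in hne].
    by apply: (W i' i) => //; rewrite eq_sym.
  have [w1 E1] := allS i (leq_trans (ltnSE (ltn_ord i)) hk).
  have [w2 E2] := allS i' (leq_trans (ltnSE (ltn_ord i')) hk).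
  move: heq; rewrite /phi E1 E2 /= => e; subst w2.
  apply: (@acyc w1 (i' - i).-1).
  rewrite prednK ?subn_gt0 //.
  by rewrite -E2 -{2}(subnK (ltnW lt)) iterpD E1.
by have := @leq_card _ _ phi inj; rewrite !card_ord ltnn.
Qed.

Definition anc (u v : 'I_m) := exists k, iterp F k.+1 v = Some u.

Lemma ancestorP u v : reflect (anc u v) (ancestor F u v).
Proof.
apply: (iffP existsP) => [[k /eqP h]|[k h]]; first by exists k.
have hk : (k < m)%N.
  rewrite ltnNge; apply/negP => hk.
  by rewrite iterp_none // in h; apply: leq_trans hk _.
by exists (Ordinal hk); apply/eqP.
Qed.

Lemma anc_trans u v w : anc u v -> anc w u -> anc w v.
Proof.
move=> [k1 h1] [k2 h2]; exists (k2.+1 + k1).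
by rewrite -addnS iterpD h1.
Qed.

Lemma anc_irr u : ~ anc u u.
Proof. by move=> [k h]; exact: (acyc h). Qed.

Lemma anc_chain u1 u2 v : anc u1 v -> anc u2 v -> u1 <> u2 -> anc u1 u2 \/ anc u2 u1.
Proof.
move=> [k1 h1] [k2 h2] hne.
case: (ltngtP k1 k2) => h.
- right; exists (k2 - k1).-1; rewrite prednK ?subn_gt0 //.
  have e : k2.+1 = (k2 - k1) + k1.+1 by rewrite addnS subnK // ltnW.
  by rewrite -h2 e iterpD h1.
- left; exists (k1 - k2).-1; rewrite prednK ?subn_gt0 //.
  have e : k1.+1 = (k1 - k2) + k2.+1 by rewrite addnS subnK // ltnW.
  by rewrite -h1 e iterpD h2.
- by subst; rewrite h1 in h2; case: h2.
Qed.

Lemma anc_parent u v : anc u v <-> (parent F v = Some u \/ exists p, parent F v = Some p /\ anc u p).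
Proof.
split.
- move=> [k]; rewrite iterpS'; case: (parent F v) => [p|] //= h.
  case: k h => [|k] h; first by left; case: h => ->.
  by right; exists p; split => //; exists k.
- case=> [h|[p [h [k hk]]]]; first by exists 0; rewrite iterpS' h.
  by exists k.+1; rewrite iterpS' h.
Qed.

Definition dep (v : 'I_m) := #|[set u | ancestor F u v]|.

Lemma dep_lt u v : anc u v -> (dep u < dep v)%N.
Proof.
move=> h; apply: proper_card; apply/properP; split.
  apply/subsetP => w; rewrite !inE => /ancestorP hw; apply/ancestorP.
  exact: anc_trans h hw.
exists u; rewrite !inE; first by apply/ancestorP.
by apply/negP => /ancestorP /anc_irr.
Qed.

Lemma dep_root v : parent F v = None -> dep v = 0.
Proof.
move=> h; apply/eqP; rewrite cards_eq0; apply/eqP/setP => u; rewrite !inE.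
apply/negbTE/negP => /ancestorP /anc_parent [|[p []]]; by rewrite h.
Qed.

Lemma dep_parent v p : parent F v = Some p -> dep v = (dep p).+1.
Proof.
move=> h; rewrite /dep.
have -> : [set u | ancestor F u v] = p |: [set u | ancestor F u p].
  apply/setP => u; rewrite !inE; apply/idP/idP.
  - move/ancestorP/anc_parent; rewrite h => -[[->]|[p' [[<-] hp]]].
      by rewrite eqxx.
    by apply/orP; right; apply/ancestorP.
  - case/orP => [/eqP ->|/ancestorP hp]; apply/ancestorP/anc_parent; first by left.
    by right; exists p.
rewrite cardsU1 inE; case: ancestorP => // /anc_irr //.
Qed.

Definition sanc (u v : 'I_m) := u = v \/ anc u v.

Lemma exists_dep_anc j v : (j <= dep v)%N -> exists u, dep u = j /\ sanc u v.
Proof.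
move: {2}(dep v) (leqnn (dep v)) => n; elim: n v => [|n IH] v hv hj.
  by exists v; split; [apply/eqP; rewrite eqn_leq hj; move: hv; rewrite leqn0 => /eqP -> | left].
case: (ltngtP j (dep v)) hj => // h _; last by exists v; split => //; left.
case E: (parent F v) => [p|]; last by rewrite dep_root in h.
have hp := dep_parent E.
have hv' : (dep p <= n)%N by move: hv; rewrite hp.
have hj' : (j <= dep p)%N by move: h; rewrite hp.
have [u [hu su]] := IH p hv' hj'.
exists u; split => //; right.
case: su => [->|a]; apply/anc_parent; rewrite E; first by left.
by right; exists p.
Qed.

Lemma sanc_same_dep r r' w : sanc r w -> sanc r' w -> dep r = dep r' -> r = r'.
Proof.
move=> [->|h1] [->|h2] hd //.
- by have := dep_lt h2; rewrite hd ltnn.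
- by have := dep_lt h1; rewrite hd ltnn.
- case: (classic (r = r')) => // hne.
  case: (anc_chain h1 h2 hne) => h; have := dep_lt h; by rewrite hd ltnn.
Qed.

End Tree.

Lemma iadd_ge0 (a b : int) : (0 <= b -> 0 <= a -> 0 <= a + b)%R. Proof. lia. Qed.
Lemma iadd_le0 (a b : int) : (b <= 0 -> a <= 0 -> a + b <= 0)%R. Proof. lia. Qed.
Lemma iabs_pos (a b : int) : (0 <= b)%R -> (0 <= a)%R -> absz (a + b)%R = (absz a + absz b)%N. Proof. lia. Qed.
Lemma iabs_neg (a b : int) : (b <= 0)%R -> (a <= 0)%R -> absz (a + b)%R = (absz a + absz b)%N. Proof. lia. Qed.

Section Graver.
Local Open Scope ring_scope.
Variables (m p : nat) (N : 'I_m -> 'I_p -> int).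
Local Notation V := {ffun 'I_p -> int}.

Definition wdot (w : 'I_p -> int) (z : V) : int := \sum_c w c * z c.
Definition kerS (S : pred 'I_m) (z : V) := forall v, S v -> wdot (N v) z = 0.
Definition sc (z h : V) := forall c, (0 <= z c -> 0 <= h c) /\ (z c <= 0 -> h c <= 0).
Definition lec (u z : V) := sc z u /\ sc z (z - u).
Definition graver S (g : V) :=
  g != 0 /\ kerS S g /\ forall u, lec u g -> kerS S u -> u != 0 -> u = g.
Definition norm1 (z : V) : nat := (\sum_c absz (z c))%N.

Lemma wdotD w x y : wdot w (x + y) = wdot w x + wdot w y.
Proof. by rewrite /wdot -big_split; apply: eq_bigr => c _; rewrite ffunE mulrDr. Qed.
Lemma wdot0 w : wdot w 0 = 0.
Proof. by rewrite /wdot big1 // => c _; rewrite ffunE mulr0. Qed.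
Lemma wdotN w x : wdot w (- x) = - wdot w x.
Proof. by rewrite /wdot -sumrN; apply: eq_bigr => c _; rewrite ffunE mulrN. Qed.
Lemma wdotB w x y : wdot w (x - y) = wdot w x - wdot w y.
Proof. by rewrite wdotD wdotN. Qed.
Lemma wdot_sum w (L : seq V) : wdot w (\sum_(h <- L) h) = \sum_(h <- L) wdot w h.
Proof.
elim: L => [|h L IH]; first by rewrite !big_nil wdot0.
by rewrite !big_cons wdotD IH.
Qed.

Lemma kerD S x y : kerS S x -> kerS S y -> kerS S (x + y).
Proof. by move=> hx hy v hv; rewrite wdotD hx // hy // addr0. Qed.
Lemma kerB S x y : kerS S x -> kerS S y -> kerS S (x - y).
Proof. by move=> hx hy v hv; rewrite wdotB hx // hy // subr0. Qed.
Lemma ker_sum S (L : seq V) : (forall h, h \in L -> kerS S h) -> kerS S (\sum_(h <- L) h).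
Proof.
move=> H v hv; rewrite wdot_sum big_seq big1 // => h hL; exact: H.
Qed.
Lemma ker_sub (S S' : pred 'I_m) z : (forall v, S' v -> S v) -> kerS S z -> kerS S' z.
Proof. by move=> hS hz v hv; apply: hz; apply: hS. Qed.

Lemma sc_trans z w h : sc z w -> sc w h -> sc z h.
Proof.
move=> h1 h2 c; have [a1 b1] := h1 c; have [a2 b2] := h2 c.
by split => hc; [apply: a2; apply: a1|apply: b2; apply: b1].
Qed.
Lemma sc_refl z : sc z z. Proof. by []. Qed.
Lemma sc0 z : sc z 0. Proof. by move=> c; rewrite ffunE. Qed.
Lemma scD z x y : sc z x -> sc z y -> sc z (x + y).
Proof.
move=> h1 h2 c; have [a1 b1] := h1 c; have [a2 b2] := h2 c; rewrite ffunE.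
split => hc; [have := a1 hc; have := a2 hc | have := b1 hc; have := b2 hc]; [exact: iadd_ge0 | exact: iadd_le0].
Qed.
Lemma sc_sum z (L : seq V) : (forall h, h \in L -> sc z h) -> sc z (\sum_(h <- L) h).
Proof.
elim: L => [|h L IH] H; first by rewrite big_nil; apply: sc0.
rewrite big_cons; apply: scD; first by apply: H; rewrite inE eqxx.
by apply: IH => h' hh'; apply: H; rewrite inE hh' orbT.
Qed.

Lemma sc_zero z h c : sc z h -> z c = 0 -> h c = 0.
Proof. move=> H hz; have [a b] := H c; rewrite hz in a b; apply/eqP; rewrite eq_le b // a //. Qed.

Lemma lec_trans u w z : lec u w -> lec w z -> lec u z.
Proof.
move=> [a1 b1] [a2 b2]; split; first exact: sc_trans a2 a1.
have -> : z - u = (z - w) + (w - u) by rewrite addrA subrK.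
by apply: scD => //; apply: sc_trans a2 b1.
Qed.

Lemma norm1D z x y : sc z x -> sc z y -> norm1 (x + y) = (norm1 x + norm1 y)%N.
Proof.
move=> h1 h2; rewrite /norm1 -big_split /=; apply: eq_bigr => c _; rewrite ffunE.
have [a1 b1] := h1 c; have [a2 b2] := h2 c.
have [hz|hz] := lerP 0 (z c).
  exact: iabs_pos (a2 hz) (a1 hz).
have hz' : z c <= 0 by apply: ltW.
exact: iabs_neg (b2 hz') (b1 hz').
Qed.

Lemma norm1_eq0 z : norm1 z = 0%N -> z = 0.
Proof.
move=> /eqP; rewrite /norm1 sum_nat_eq0 => /forallP H; apply/ffunP => c.
by rewrite ffunE; have := H c; rewrite implyTb absz_eq0 => /eqP.
Qed.

Lemma norm1_gt0 z : z != 0 -> (0 < norm1 z)%N.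
Proof. by move=> hz; rewrite lt0n; apply/eqP => /norm1_eq0 h; rewrite h eqxx in hz. Qed.

Lemma norm1_sum z (L : seq V) : (forall h, h \in L -> sc z h) ->
  norm1 (\sum_(h <- L) h) = (\sum_(h <- L) norm1 h)%N.
Proof.
elim: L => [|h L IH] H.
  rewrite !big_nil; apply/eqP; rewrite /norm1 sum_nat_eq0; apply/forallP => c.
  by rewrite ffunE.
have HL : forall h', h' \in L -> sc z h' by move=> h' hh'; apply: H; rewrite inE hh' orbT.
rewrite !big_cons (@norm1D z) ?IH //; first by apply: H; rewrite inE eqxx.
exact: sc_sum.
Qed.

Lemma lec_norm u z : lec u z -> norm1 z = (norm1 u + norm1 (z - u)%R)%N.
Proof. by move=> [a b]; rewrite -(@norm1D z) // addrC subrK. Qed.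

Lemma exists_graver S z : z != 0 -> kerS S z -> exists g, graver S g /\ lec g z.
Proof.
move: {2}(norm1 z) (leqnn (norm1 z)) => n; elim: n z => [|n IH] z hn hz hk.
  by have := norm1_gt0 hz; rewrite leqn0 in hn; rewrite (eqP hn).
case: (classic (graver S z)) => hg.
  exists z; split; first exact: hg.
  split; first exact: sc_refl.
  rewrite subrr; exact: sc0.
have : ~ (forall u, lec u z -> kerS S u -> u != 0 -> u = z) by move=> H; apply: hg.
move=> /not_all_ex_not [u] H1.
have [hl H2] := imply_to_and _ _ H1.
have [hku H3] := imply_to_and _ _ H2.
have [hu0 hne] := imply_to_and _ _ H3.
have hlt : (norm1 u < norm1 z)%N.
  rewrite (lec_norm hl) -addn1 leq_add2l norm1_gt0 //.
  by rewrite subr_eq0; apply/eqP => e; apply: hne.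
have [g [hg1 hg2]] := IH u (leq_trans (ltnSE (leq_trans hlt hn)) (leqnn _)) hu0 hku.
by exists g; split => //; apply: lec_trans hg2 hl.
Qed.

Lemma graver_decomp S z : kerS S z ->
  exists L : seq V, (forall h, h \in L -> graver S h /\ sc z h) /\ \sum_(h <- L) h = z.
Proof.
move: {2}(norm1 z) (leqnn (norm1 z)) => n; elim: n z => [|n IH] z hn hk.
  exists [::]; split => //; rewrite big_nil; apply/esym/norm1_eq0.
  by apply/eqP; rewrite -leqn0.
case: (eqVneq z 0) => [->|hz0]; first by exists [::]; rewrite big_nil.
have [g [hg [a b]]] := exists_graver hz0 hk.
have hlt : (norm1 (z - g)%R < norm1 z)%N.
  rewrite (lec_norm (conj a b)) -[X in (X < _)%N]add0n ltn_add2r norm1_gt0 //; by case: hg.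
have hk' : kerS S (z - g) by apply: kerB => //; case: hg => _ [].
have [L [HL HS]] := IH (z - g) (ltnSE (leq_trans hlt hn)) hk'.
exists (g :: L); split; last by rewrite big_cons HS addrC subrK.
move=> h; rewrite inE => /orP [/eqP ->|hh]; first by split.
have [h1 h2] := HL h hh; split => //; exact: sc_trans b h2.
Qed.

End Graver.

Lemma ihelp1 (a b c : int) : (a <= 0)%R -> (b < 0)%R -> (c <= 0)%R -> (a + (b + c) = 0)%R -> False.
Proof. lia. Qed.
Lemma ihelp2 (a c : int) : (a + c = 0)%R -> (0 < a)%R -> (0 <= c)%R -> False.
Proof. lia. Qed.

Lemma ihelp3 (a : int) (K : nat) : (`|a| <= K%:Z)%R -> (absz (a + K%:Z)%R <= K.*2)%N.
Proof. lia. Qed.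
Lemma ihelp4 (a b : int) (K : nat) : (0 <= a + K%:Z)%R -> (0 <= b + K%:Z)%R -> absz (a + K%:Z)%R = absz (b + K%:Z)%R -> a = b.
Proof. lia. Qed.

Lemma ihelp5 (a : int) (K : nat) : (`|a| <= K%:Z)%R -> (0 <= a + K%:Z)%R.
Proof. lia. Qed.

Section Steinitz.
Local Open Scope ring_scope.
Variables (T : eqType) (w : T -> int) (K : nat).

Lemma stein_step1 (s a : int) : 0 < s -> `|s| <= K%:Z -> a < 0 -> `|a| <= K%:Z -> `|s + a| <= K%:Z.
Proof. lia. Qed.
Lemma stein_step2 (s a : int) : s <= 0 -> `|s| <= K%:Z -> 0 <= a -> `|a| <= K%:Z -> `|s + a| <= K%:Z.
Proof. lia. Qed.

Lemma steinitz_perm (L : seq T) (s : int) :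
  (forall x, x \in L -> `|w x| <= K%:Z) -> `|s| <= K%:Z -> s + \sum_(x <- L) w x = 0 ->
  exists L', perm_eq L L' /\ forall i, `|s + \sum_(x <- take i L') w x| <= K%:Z.
Proof.
move: {2}(size L) (leqnn (size L)) => n; elim: n L s => [|n IH] L s hn hw hs hsum.
  move: hn; rewrite leqn0 => /nilP ->; exists [::]; split => // i.
  by rewrite big_nil addr0.
case: L hn hw hsum => [|y L0] hn hw hsum.
  by exists [::]; split => // i; rewrite big_nil addr0.
set L := y :: L0 in hn hw hsum *.
have [x hx hxs] : exists2 x, x \in L & `|s + w x| <= K%:Z.
  have [hs0|hs0] := ltrP 0 s.
    case: (boolP (has (fun x => w x < 0) L)) => [/hasP [x hx hwx]|].
      by exists x => //; apply: stein_step1 => //; apply: hw.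
    move/hasPn => H; exfalso.
    have : 0 <= \sum_(x <- L) w x.
      by rewrite big_seq; apply: sumr_ge0 => x /H; rewrite -leNgt.
    move: hsum hs0; exact: ihelp2.
  case: (boolP (has (fun x => 0 <= w x) L)) => [/hasP [x hx hwx]|].
    by exists x => //; apply: stein_step2 => //; apply: hw.
  move/hasPn => H; exfalso.
  have h1 : w y < 0 by have := H y (mem_head _ _); rewrite -ltNge.
  have h2 : \sum_(x <- L0) w x <= 0.
    rewrite big_seq; apply: sumr_le0 => x hx; have := H x; rewrite inE hx orbT => /(_ isT).
    by rewrite -ltNge => /ltW.
  move: hsum; rewrite /L big_cons; exact: ihelp1.
have hp := perm_to_rem hx.
have hsz : (size (rem x L) <= n)%N by rewrite size_rem // -ltnS.
have hw' : forall x', x' \in rem x L -> `|w x'| <= K%:Z.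
  by move=> x' hx'; apply: hw; apply: (mem_rem hx').
have hsum' : (s + w x) + \sum_(x' <- rem x L) w x' = 0.
  have e : \sum_(x' <- L) w x' = w x + \sum_(x' <- rem x L) w x'.
    by rewrite (perm_big _ hp) big_cons.
  by rewrite -addrA -e.
have [L'' [hp'' hpre]] := IH (rem x L) (s + w x) hsz hw' hxs hsum'.
exists (x :: L''); split.
  by apply: perm_trans hp _; rewrite perm_cons.
case=> [|i]; first by rewrite big_nil addr0.
by rewrite /= big_cons addrA.
Qed.

Lemma steinitz_zero (L : seq T) :
  (forall x, x \in L -> `|w x| <= K%:Z) -> \sum_(x <- L) w x = 0 -> ((K.*2).+2 <= size L)%N ->
  exists A B C, perm_eq L (A ++ B ++ C) /\ B != [::] /\ C != [::] /\ \sum_(x <- B) w x = 0.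
Proof.
move=> hw hsum hsz.
have h0 : `|0 : int| <= K%:Z by rewrite normr0.
have h1 : 0 + \sum_(x <- L) w x = 0 by rewrite add0r.
have [L' [hp hpre]] := @steinitz_perm L 0 hw h0 h1.
have hsz' : size L' = size L by rewrite (perm_size hp).
pose ps (i : nat) : int := \sum_(x <- take i L') w x.
pose phi (i : 'I_(size L')) : 'I_(K.*2).+1 := inord (absz (ps i + K%:Z)).
have hb : forall i, (absz (ps i + K%:Z)%R <= K.*2)%N.
  move=> i; have := hpre i; rewrite add0r; exact: ihelp3.
have : ~ injective phi.
  move=> inj; have := @leq_card _ _ phi inj; rewrite !card_ord.
  by rewrite hsz'; move: hsz; lia.
move=> Hn.
have [a Ha] := not_all_ex_not _ _ Hn.
have [b Hb] := not_all_ex_not _ _ Ha.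
have [hab hne] := imply_to_and _ _ Hb.
have heq : ps a = ps b.
  have := congr1 (@nat_of_ord _) hab; rewrite /phi !inordK ?ltnS ?hb // => e.
  apply: ihelp4 e; [have := hpre a | have := hpre b]; rewrite add0r; exact: ihelp5.
clear Hn Ha Hb hab.
wlog lt : a b heq hne / (a < b)%N.
  move=> W; case: (ltngtP a b) => h; [exact: (W a b)| |].
    by apply: (W b a) => // e; apply: hne.
  by exfalso; apply: hne; apply: val_inj.
exists (take a L'), (take (b - a) (drop a L')), (drop b L').
split.
  have -> : drop b L' = drop (b - a) (drop a L') by rewrite drop_drop subnK // ltnW.
  by rewrite !cat_take_drop.
have hb' := ltn_ord b.
split.
  rewrite -size_eq0 size_take size_drop.
  case: ifP => _; rewrite subn_eq0 -ltnNge //.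
split; first by rewrite -size_eq0 size_drop subn_eq0 -ltnNge.
have e := heq; rewrite /ps -(subnKC (ltnW lt)) takeD big_cat /= in e.
by apply: (@addrI _ (\sum_(x <- take a L') w x)); rewrite addr0 -e.
Qed.

End Steinitz.

Fixpoint Gb (D t : nat) : nat :=
  match t with 0 => 1 | t'.+1 => ((D * Gb D t').*2.+1 * Gb D t')%N end.

Lemma sum_le_size (T : eqType) (L : seq T) (f : T -> nat) B :
  (forall h, h \in L -> f h <= B)%N -> (\sum_(h <- L) f h <= size L * B)%N.
Proof.
elim: L => [|h L IH] H; first by rewrite big_nil.
rewrite big_cons /= mulSn leq_add //; first by apply: H; rewrite inE eqxx.
by apply: IH => h' hh'; apply: H; rewrite inE hh' orbT.
Qed.

Section Main.
Local Open Scope ring_scope.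
Variables (m p : nat) (N : 'I_m -> 'I_p -> int) (F : rtree m) (Dl : nat).
Hypothesis acyc : forall (v : 'I_m) (k : nat), iterp F k.+1 v <> Some v.
Hypothesis hadj : forall v v' c, v != v' -> N v c != 0 -> N v' c != 0 ->
  ancestor F v v' || ancestor F v' v.
Hypothesis hD : forall v c, `|N v c| <= Dl%:Z.
Local Notation V := {ffun 'I_p -> int}.

Definition Sj (j : nat) : pred 'I_m := fun v => (j <= dep F v)%N.
Definition colr r c := [exists v, ((v == r) || ancestor F r v) && (N v c != 0)].

Lemma colr_disj r r' c : dep F r = dep F r' -> r != r' -> colr r c -> colr r' c -> False.
Proof.
move=> hd hne /existsP [v /andP [h1 hv]] /existsP [v' /andP [h2 hv']].
have s1 : sanc F r v.
  by case/orP: h1 => [/eqP ->|/(ancestorP acyc) h]; [left|right].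
have s2 : sanc F r' v'.
  by case/orP: h2 => [/eqP ->|/(ancestorP acyc) h]; [left|right].
have ne : r <> r' by move=> e; rewrite e eqxx in hne.
case: (eqVneq v v') => [e|hvv].
  by subst v'; apply: ne; apply: (sanc_same_dep acyc s1 s2).
case/orP: (hadj hvv hv hv') => /(ancestorP acyc) ha.
- have a1 : anc F r v'.
    by case: s1 => [->|h] //; apply: anc_trans ha h.
  by apply: ne; apply: (sanc_same_dep acyc (or_intror a1) s2).
- have a2 : anc F r' v.
    by case: s2 => [->|h] //; apply: anc_trans ha h.
  by apply: ne; apply: (sanc_same_dep acyc s1 (or_intror a2)).
Qed.

Lemma wdot_bound (w : 'I_p -> int) (h : V) : (forall c, `|w c| <= Dl%:Z) ->
  `|wdot w h| <= (Dl * norm1 h)%N%:Z.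
Proof.
move=> hw; rewrite /wdot /norm1.
apply: le_trans (ler_norm_sum _ _ _) _.
rewrite PoszM (big_morph Posz PoszD (erefl (Posz 0))) mulr_sumr.
apply: ler_sum => c _; rewrite normrM abszE; apply: ler_wpM2r => //.
Qed.

Lemma graver_nz S (g : V) : graver N S g -> g != 0.
Proof. by case. Qed.

Lemma localize j (g : V) : graver N (Sj j) g ->
  exists w : 'I_p -> int, (forall c, `|w c| <= Dl%:Z) /\ wdot w g = 0 /\
    forall s, lec s g -> kerS N (Sj j.+1) s -> wdot w s = 0 -> kerS N (Sj j) s.
Proof.
move=> hg; have [hg0 [hgk hgm]] := hg.
case: (classic (exists r c, dep F r = j /\ g c != 0 /\ N r c != 0)).
  move=> [r [c0 [hr [hgc0 hNc0]]]].
  pose gr : V := [ffun c => if colr r c then g c else 0].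
  have hcolr0 : colr r c0 by apply/existsP; exists r; rewrite eqxx hNc0.
  have hlec : lec gr g.
    split => c; rewrite ?ffunE /=.
      by case: (colr r c) => //; split => _.
    case: (colr r c); rewrite ?subrr ?subr0 //.
  have hgr0 : gr != 0.
    by apply/eqP => /ffunP /(_ c0); rewrite !ffunE hcolr0 => e; rewrite e eqxx in hgc0.
  have hgrk : kerS N (Sj j) gr.
    move=> v hv; have [u [hu su]] := exists_dep_anc acyc hv.
    case: (eqVneq u r) => [eur|nur].
      subst u; rewrite -(hgk v hv) /wdot; apply: eq_bigr => c _; rewrite ffunE.
      case: (eqVneq (N v c) 0) => [->|hN]; first by rewrite !mul0r.
      suff -> : colr r c by [].
      apply/existsP; exists v; rewrite hN andbT.
      by case: su => [->|/(ancestorP acyc) ->]; rewrite ?eqxx ?orbT.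
    rewrite /wdot big1 // => c _; rewrite ffunE.
    case: (eqVneq (N v c) 0) => [->|hN]; first by rewrite mul0r.
    case E: (colr r c); last by rewrite mulr0.
    exfalso; apply: (@colr_disj u r c) => //; first by rewrite hu hr.
    apply/existsP; exists v; rewrite hN andbT.
    by case: su => [->|/(ancestorP acyc) ->]; rewrite ?eqxx ?orbT.
  have egr := hgm gr hlec hgrk hgr0.
  have hzero : forall v c, dep F v = j -> v != r -> g c != 0 -> N v c = 0.
    move=> v c hv hvr hgc; apply/eqP; apply/negPn/negP => hN.
    have hc : colr r c.
      case E: (colr r c) => //; move: hgc; rewrite -egr ffunE E eqxx //.
    apply: (@colr_disj r v c) => //; first by rewrite hv hr.
      by rewrite eq_sym.
    by apply/existsP; exists v; rewrite eqxx hN.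
  exists (N r); split => //; split; first by apply: hgk; rewrite /Sj hr.
  move=> s hs hsk hsw v hv.
  move: hv; rewrite /Sj leq_eqVlt => /orP [/eqP hjv|hjv]; last by apply: hsk.
  case: (eqVneq v r) => [->|hvr] //.
  rewrite /wdot big1 // => c _.
  case: (eqVneq (g c) 0) => [hgc|hgc].
    by rewrite (sc_zero hs.1 hgc) mulr0.
  by rewrite (hzero v c (esym hjv) hvr hgc) mul0r.
move=> hno; exists (fun _ => 0); split => [c|]; first by rewrite normr0.
split; first by rewrite /wdot big1 // => c _; rewrite mul0r.
move=> s hs hsk _ v hv.
move: hv; rewrite /Sj leq_eqVlt => /orP [/eqP hjv|hjv]; last by apply: hsk.
rewrite /wdot big1 // => c _.
case: (eqVneq (g c) 0) => [hgc|hgc].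
  by rewrite (sc_zero hs.1 hgc) mulr0.
case: (eqVneq (N v c) 0) => [->|hN]; first by rewrite mul0r.
by exfalso; apply: hno; exists v, c.
Qed.

Lemma norm1_0 : norm1 (0 : V) = 0%N.
Proof. by apply/eqP; rewrite /norm1 sum_nat_eq0; apply/forallP => c; rewrite ffunE. Qed.

Lemma norm1_list_pos z (L : seq V) h0 : (forall h, h \in L -> sc z h) -> h0 \in L -> h0 != 0 ->
  (0 < norm1 (\sum_(h <- L) h)%R)%N.
Proof.
move=> H hin hnz; rewrite (norm1_sum H).
elim: L H hin => [|h L IH] H //; rewrite inE big_cons => /orP [/eqP <-|hin].
  by apply: leq_trans (norm1_gt0 hnz) (leq_addr _ _).
apply: leq_trans (IH _ hin) (leq_addl _ _).
by move=> h' hh'; apply: H; rewrite inE hh' orbT.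
Qed.

Lemma ihelp6 (a : int) : a != 0 -> (0 <= a -> 0 <= (if 0 < a then (1:int) else -1)) /\
  (a <= 0 -> (if 0 < a then (1:int) else -1) <= 0) /\
  (0 <= a -> 0 <= a - (if 0 < a then (1:int) else -1)) /\
  (a <= 0 -> a - (if 0 < a then (1:int) else -1) <= 0) /\ absz (if 0 < a then (1:int) else -1) = 1%N.
Proof. case: ifP => h ha; lia. Qed.

Theorem graver_bound t : forall j (g : V), (forall v, (dep F v < j + t)%N) ->
  graver N (Sj j) g -> (norm1 g <= Gb Dl t)%N.
Proof.
elim: t => [|t IH] j g hdep hg.
  have [hg0 [hgk hgm]] := hg.
  have [c hc] : exists c, g c != 0.
    apply: NNPP => H; move/eqP: hg0; apply; apply/ffunP => c; rewrite ffunE.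
    by apply/eqP/negPn/negP => hc; apply: H; exists c.
  pose u : V := [ffun c' => if c' == c then (if 0 < g c then 1 else -1) else 0].
  have [h1 [h2 [h3 [h4 h5]]]] := ihelp6 hc.
  have hu : lec u g.
    split => c'; rewrite !ffunE; case: (eqVneq c' c) => [->|_] //; rewrite ?subr0 //.
  have hu0 : u != 0.
    apply/eqP => /ffunP /(_ c); rewrite !ffunE eqxx; case: ifP => //.
  have huk : kerS N (Sj j) u.
    by move=> v; rewrite /Sj; have := hdep v; rewrite addn0; lia.
  rewrite -(hgm u hu huk hu0) /norm1 (bigD1 c) //= big1 ?addn0 ?ffunE ?eqxx ?h5 //.
  by move=> c' hc'; rewrite ffunE (negbTE hc').
have [hg0 [hgk hgm]] := hg.
have hgk' : kerS N (Sj j.+1) g.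
  by apply: ker_sub hgk => v; rewrite /Sj; apply: ltnW.
have [L [HL HS]] := graver_decomp hgk'.
have hnL : forall h, h \in L -> (norm1 h <= Gb Dl t)%N.
  move=> h hh; apply: (IH j.+1) (HL h hh).1 => v; rewrite addSnnS; exact: hdep.
have hsc : forall h, h \in L -> sc g h by move=> h /HL [].
have hnorm : norm1 g = (\sum_(h <- L) norm1 h)%N by rewrite -(norm1_sum hsc) HS.
have hsize : (size L <= (Dl * Gb Dl t).*2.+1)%N.
  rewrite leqNgt; apply/negP => hbig.
  have [w [hw [hwg hkey]]] := localize hg.
  pose K := (Dl * Gb Dl t)%N.
  have hwL : forall h, h \in L -> `|wdot w h| <= K%:Z.
    move=> h hh; apply: le_trans (wdot_bound h hw) _.
    by rewrite lez_nat leq_mul2l hnL ?orbT.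
  have hws : \sum_(h <- L) wdot w h = 0 by rewrite -wdot_sum HS.
  have [A [B [C [hp [hB [hC hBs]]]]]] := steinitz_zero hwL hws hbig.
  have memL : forall h, h \in A ++ B ++ C -> h \in L by move=> h; rewrite (perm_mem hp).
  have scA : forall h, h \in A -> sc g h by move=> h hh; apply: hsc; apply: memL; rewrite mem_cat hh.
  have scB : forall h, h \in B -> sc g h.
    by move=> h hh; apply: hsc; apply: memL; rewrite !mem_cat hh orbT.
  have scC : forall h, h \in C -> sc g h.
    by move=> h hh; apply: hsc; apply: memL; rewrite !mem_cat hh !orbT.
  have hsum : \sum_(h <- A) h + (\sum_(h <- B) h + \sum_(h <- C) h) = g.
    by rewrite -!big_cat -(perm_big _ hp).
  set s := \sum_(h <- B) h.
  have hgs : g - s = \sum_(h <- A) h + \sum_(h <- C) h.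
    by rewrite -hsum addrCA [X in X - _]addrC addrK.
  have hls : lec s g.
    split; first exact: sc_sum.
    by rewrite hgs; apply: scD; apply: sc_sum.
  have hsk : kerS N (Sj j.+1) s.
    by apply: ker_sum => h hh; apply: (HL h (memL h _)).1.2.1; rewrite !mem_cat hh orbT.
  have hsw : wdot w s = 0 by rewrite wdot_sum.
  have hs0 : s != 0.
    case EB: B hB => [//|h0 B'] _.
    have h0L : h0 \in L by apply: memL; rewrite !mem_cat EB mem_head orbT.
    have hh0 := (HL h0 h0L).1.1.
    apply/negP => /eqP e.
    have := norm1_list_pos scB (_ : h0 \in B) hh0; rewrite -/s e ?EB ?mem_head //.
    by move=> H; have := H isT; rewrite norm1_0.
  have egs := hgs; rewrite (hgm s hls (hkey s hls hsk hsw) hs0) subrr in egs.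
  case EC: C hC => [//|h0 C'] _.
  have h0L : h0 \in L by apply: memL; rewrite !mem_cat EC mem_head !orbT.
  have hh0 := (HL h0 h0L).1.1.
  have := norm1_list_pos scC (_ : h0 \in C) hh0; rewrite ?EC ?mem_head // -EC.
  have := norm1D (z:=g) (sc_sum scA) (sc_sum scC).
  rewrite -egs norm1_0 => /esym /eqP; rewrite addn_eq0 => /andP [_ /eqP ->].
  by move=> H; have := H isT.
rewrite hnorm /=; apply: leq_trans (sum_le_size hnL) _.
by rewrite leq_mul2r hsize orbT.
Qed.

End Main.
Local Open Scope ring_scope.

Lemma denq_le (q : rat) (gm a : int) : gm != 0 -> gm%:~R * q = a%:~R -> (absz (denq q) <= absz gm)%N.
Proof.
move=> hg e.
have e2 : gm * numq q = a * denq q.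
  apply: (@intr_inj rat); rewrite !rmorphM /= numqE mulrA e //.
have hd : (denq q %| gm * numq q)%Z by rewrite e2 dvdz_mull.
rewrite Gauss_dvdzl in hd; last by rewrite coprimezE coprime_sym coprime_num_den.
by apply: dvdn_leq; [rewrite absz_gt0 | exact: hd].
Qed.

Theorem corollary3 :
  exists g : nat -> nat -> nat,
    forall (m n : nat) (A : 'M[int]_(m, n)) (F : rtree m) (f : 'I_m -> 'I_n),
      td_decomposition_dual A F ->
      injective f ->
      map_mx (intr : int -> rat) (colsub f A) \in unitmx ->
      (fr (invmx (map_mx (intr : int -> rat) (colsub f A)))
         <= g (height F) (maxnorm A))%N.
Proof.
exists (fun h D => Gb (maxn D 1) h).
move=> m n A F f [[acyc _] hadjA] finj Hunit.
set M := colsub f A; set Mq := map_mx (intr : int -> rat) M.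
rewrite /fr; apply/bigmax_leqP => i _; apply/bigmax_leqP => j _.
pose N (r : 'I_m) (c : 'I_m.+1) : int :=
  match unlift ord_max c with Some c' => M r c' | None => Posz (r == j) end.
pose Dl := maxn (maxnorm A) 1.
have hadj : forall v v' c, v != v' -> N v c != 0 -> N v' c != 0 ->
    ancestor F v v' || ancestor F v' v.
  move=> v v' c hvv; rewrite /N; case: (unlift ord_max c) => [c'|].
    rewrite !mxE => h1 h2; apply: (hadjA v v'); rewrite /dual_adj hvv /=.
    by apply/existsP; exists (f c'); rewrite h1 h2.
  move=> h1 h2; exfalso.
  have e1 : v = j by apply/eqP; move: h1; case: (v == j).
  have e2 : v' = j by apply/eqP; move: h2; case: (v' == j).
  by rewrite e1 e2 eqxx in hvv.
have hD : forall v c, `|N v c| <= Dl%:Z.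
  move=> v c; rewrite /N; case: (unlift ord_max c) => [c'|].
    rewrite mxE -abszE lez_nat; apply: (leq_trans _ (leq_maxl _ _)).
    rewrite /maxnorm.
    apply: leq_trans (@leq_bigmax _ (fun j0 => `|A v j0|%N) (f c')) _.
    exact: (@leq_bigmax _ (fun i0 => \max_(j0 < n) `|A i0 j0|%N) v).
  by rewrite -abszE lez_nat; apply: (leq_trans _ (leq_maxr _ _)); case: (v == j).
have hdep : forall v, (dep F v < 0 + height F)%N.
  move=> v; rewrite add0n /height.
  exact: (@leq_bigmax _ (fun v0 => (#|[set u | ancestor F u v0]|).+1) v).
pose x (c : 'I_m) : rat := invmx Mq c j.
pose D : int := \prod_c denq (x c).
have hD0 : D != 0.
  by apply/prodf_neq0 => c _; rewrite denq_neq0.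
pose z : {ffun 'I_m.+1 -> int} := [ffun c => match unlift ord_max c with
   Some c' => numq (x c') * \prod_(c'' | c'' != c') denq (x c'') | None => - D end].
have hzl : forall c', (z (lift ord_max c'))%:~R = D%:~R * x c'.
  move=> c'; rewrite ffunE liftK rmorphM /= (numqE (x c')) /D [in RHS](bigD1 c') //= rmorphM /=.
  ring.
have hzm : z ord_max = - D by rewrite ffunE unlift_none.
have hwid : forall c : 'I_m, widen_ord (leqnSn m) c = lift ord_max c.
  by move=> c; apply: val_inj; rewrite [RHS]lift_max.
have hsplit : forall (v : 'I_m) (y : {ffun 'I_m.+1 -> int}),
    (wdot (N v) y)%:~R = \sum_(c < m) Mq v c * (y (lift ord_max c))%:~R
                        + (v == j)%:R * (y ord_max)%:~R :> rat.
  move=> v y; rewrite /wdot rmorph_sum big_ord_recr /=; congr (_ + _).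
    by apply: eq_bigr => c _; rewrite hwid rmorphM /N liftK /Mq /M !mxE.
  by rewrite rmorphM /N unlift_none; case: (v == j).
have hzk : kerS N (Sj F 0) z.
  move=> v _; apply: (@intr_inj rat); rewrite hsplit rmorph0 hzm.
  have -> : \sum_(c < m) Mq v c * (z (lift ord_max c))%:~R = D%:~R * (Mq *m invmx Mq) v j.
    rewrite mxE mulr_sumr; apply: eq_bigr => c _; rewrite hzl /x; ring.
  rewrite mulmxV // mxE rmorphN /=; ring.
have hz0 : z != 0.
  apply/eqP => /ffunP /(_ ord_max); rewrite hzm ffunE => /eqP; by rewrite oppr_eq0 (negbTE hD0).
have [g [hg hgz]] := exists_graver hz0 hzk.
have hb := graver_bound acyc hadj hD hdep hg.
pose gm := g ord_max.
pose gq : 'cV[rat]_m := \col_c (g (lift ord_max c))%:~R.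
have hMg : Mq *m gq = \col_v (- ((v == j)%:R * gm%:~R)).
  apply/matrixP => v k; rewrite !mxE.
  have := hg.2.1 v isT => /(congr1 (intr : int -> rat)); rewrite hsplit rmorph0.
  move/eqP; rewrite addr_eq0 => /eqP <-; apply: eq_bigr => c _; rewrite !mxE.
  by [].
have hgx : forall c, (g (lift ord_max c))%:~R = - gm%:~R * x c.
  move=> c; have := congr1 (mulmx (invmx Mq)) hMg; rewrite mulKmx // => /matrixP /(_ c 0).
  rewrite !mxE => ->; rewrite (bigD1 j) //= big1 ?addr0.
    by rewrite !mxE eqxx mul1r /x mulrN mulNr mulrC.
  by move=> v hv; rewrite !mxE (negbTE hv) mul0r oppr0 mulr0.
have hgm0 : gm != 0.
  apply/negP => /eqP e; move: hg => [hg0 _]; move/eqP: hg0; apply.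
  apply/ffunP => c; rewrite ffunE.
  case: (unliftP ord_max c) => [c'|] ->; last by [].
  by apply: (@intr_inj rat); rewrite hgx e rmorph0 oppr0 mul0r.
apply: leq_trans (denq_le (gm := - gm) (a := g (lift ord_max i)) _ _) _.
- by rewrite oppr_eq0.
- by rewrite hgx /x rmorphN.
apply: leq_trans hb; rewrite abszN /norm1 (bigD1 ord_max) //=.
exact: leq_addr.
Qed.
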